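(* Let $A\in\mathbb{R}^{m_A\times n}$, $B\in\mathbb{R}^{m_B\times n}$, $b\in\mathbb{R}^{m_A}$, $d\in\mathbb{R}^{m_B}$, with $\operatorname{rk}\begin{pmatrix}A\\ B\end{pmatrix}=n$. Let $P=\{x\in\mathbb{R}^n: Ax=b,\ Bx\le d\}$, $M=\begin{pmatrix}A&0\\ B&I_{m_B}\end{pmatrix}$, $q=\begin{pmatrix}b\\ d\end{pmatrix}$, $\bar W=\ker(M)\subseteq\mathbb{R}^{n+m_B}$, $\bar P=\{(x,s)\in\mathbb{R}^n\times\mathbb{R}^{m_B}: M(x,s)=q,\ s\ge\mathbb{0}\}$, $W=\{s: (x,s)\in\bar W \text{ for some } x\}$, and $Q=\{s:(x,s)\in\bar P\text{ for some }x\}$. Then: (1) there is an invertible affine bijection $\psi: Q\to P$ defined by $M(\psi(s),s)=q$; (2) $g\in\mathbb{R}^n$ is an elementary vector in the sense that $g\in\ker(A)$ and $Bg$ is support-minimal in $\{By: y\in\ker(A),\ y\ne\mathbb{0}\}$ if and only if there exists $h\in\mathbb{R}^{m_B}$ with $(g,h)\in\bar W$, $h\ne\mathbb{0}$, and $h$ support-minimal among nonzero vectors of $W$; (3) for such a pair $(g,h)\in\bar W$ and any $s\in Q$, letting $s'=\operatorname{aug}_Q(s,h)$, we have $\psi(s')=\operatorname{aug}_P(\psi(s),g)$.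
   Context: For a polyhedron $R$, a point $x\in R$ and a direction $g$, $\operatorname{aug}_R(x,g)=x+\alpha g$ with $\alpha=\max\{\bar\alpha: x+\bar\alpha g\in R\}$ (the maximal step along $g$). Support-minimal in a set means no nonzero element of the set has strictly smaller support. *)

(* Defs.v *)
(* Column vectors 'cV[R]_k; R : realFieldType (ordered field; R = reals is an instance). *)
From HB Require Import structures.
From mathcomp Require Import all_boot all_order all_algebra.
Set Implicit Arguments. Unset Strict Implicit. Unset Printing Implicit Defensive.
Import Order.TTheory GRing.Theory Num.Theory.
Local Open Scope ring_scope.

Section Defs.
Variable R : realFieldType.

Definition polyhedronP (n mA mB : nat) (A : 'M[R]_(mA, n)) (B : 'M[R]_(mB, n))
  (b : 'cV[R]_mA) (d : 'cV[R]_mB) (x : 'cV[R]_n) : Prop :=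
  A *m x = b /\ forall i, (B *m x) i 0 <= d i 0.

Definition Mmat (n mA mB : nat) (A : 'M[R]_(mA, n)) (B : 'M[R]_(mB, n))
  : 'M[R]_(mA + mB, n + mB) := block_mx A 0 B 1%:M.

Definition qvec (mA mB : nat) (b : 'cV[R]_mA) (d : 'cV[R]_mB) : 'cV[R]_(mA + mB) :=
  col_mx b d.

Definition Wbar (n mA mB : nat) (A : 'M[R]_(mA, n)) (B : 'M[R]_(mB, n))
  (x : 'cV[R]_n) (s : 'cV[R]_mB) : Prop :=
  Mmat A B *m col_mx x s = 0.

Definition Pbar (n mA mB : nat) (A : 'M[R]_(mA, n)) (B : 'M[R]_(mB, n))
  (b : 'cV[R]_mA) (d : 'cV[R]_mB) (x : 'cV[R]_n) (s : 'cV[R]_mB) : Prop :=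
  Mmat A B *m col_mx x s = qvec b d /\ forall i, 0 <= s i 0.

Definition Wproj (n mA mB : nat) (A : 'M[R]_(mA, n)) (B : 'M[R]_(mB, n))
  (s : 'cV[R]_mB) : Prop := exists x, Wbar A B x s.

Definition Qproj (n mA mB : nat) (A : 'M[R]_(mA, n)) (B : 'M[R]_(mB, n))
  (b : 'cV[R]_mA) (d : 'cV[R]_mB) (s : 'cV[R]_mB) : Prop := exists x, Pbar A B b d x s.

Definition supp (k : nat) (v : 'cV[R]_k) : {set 'I_k} := [set i | v i 0 != 0].

Definition support_minimal (k : nat) (S : 'cV[R]_k -> Prop) (v : 'cV[R]_k) : Prop :=
  S v /\ ~ (exists w, S w /\ w <> 0 /\ supp w \proper supp v).

Definition elementary (n mA mB : nat) (A : 'M[R]_(mA, n)) (B : 'M[R]_(mB, n))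
  (g : 'cV[R]_n) : Prop :=
  A *m g = 0 /\
  support_minimal (fun v => exists y, A *m y = 0 /\ y <> 0 /\ v = B *m y) (B *m g).

Definition is_aug (k : nat) (Rg : 'cV[R]_k -> Prop) (x g y : 'cV[R]_k) : Prop :=
  exists alpha : R, Rg (x + alpha *: g) /\ y = x + alpha *: g /\
    forall beta : R, Rg (x + beta *: g) -> beta <= alpha.

End Defs.

(* Main.v *)
Require Import Defs.
From HB Require Import structures.
From mathcomp Require Import all_boot all_order all_algebra.
Import Order.TTheory GRing.Theory Num.Theory.
Local Open Scope ring_scope.
Lemma Mmul (R : realFieldType) (n mA mB : nat) (A : 'M[R]_(mA, n)) (B : 'M[R]_(mB, n))
  (x : 'cV[R]_n) (s : 'cV[R]_mB) :
  Mmat A B *m col_mx x s = col_mx (A *m x) (B *m x + s).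
Proof. by rewrite /Mmat mul_block_col mul0mx addr0 mul1mx. Qed.

Lemma Pbar_iff (R : realFieldType) (n mA mB : nat) (A : 'M[R]_(mA, n)) (B : 'M[R]_(mB, n))
  b d x s : Pbar A B b d x s <-> [/\ A *m x = b, B *m x + s = d & forall i, 0 <= s i 0].
Proof.
rewrite /Pbar Mmul /qvec; split.
  by case=> /eq_col_mx [-> ->] H.
by case=> -> -> H.
Qed.

Lemma Wbar_iff (R : realFieldType) (n mA mB : nat) (A : 'M[R]_(mA, n)) (B : 'M[R]_(mB, n))
  x s : Wbar A B x s <-> A *m x = 0 /\ B *m x + s = 0.
Proof.
rewrite /Wbar Mmul -col_mx0; split.
  by move/eq_col_mx.
by case=> -> ->.
Qed.

Lemma P_Q (R : realFieldType) (n mA mB : nat) (A : 'M[R]_(mA, n)) (B : 'M[R]_(mB, n))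
  b d x t : polyhedronP A B b d x -> B *m x + t = d -> Pbar A B b d x t.
Proof.
case=> hA hB ht; apply/Pbar_iff; split => // i.
have := hB i; rewrite -ht.
have -> : (B *m x + t) i 0 = (B *m x) i 0 + t i 0 by rewrite !mxE.
by rewrite lerDl.
Qed.

Lemma Pbar_P (R : realFieldType) (n mA mB : nat) (A : 'M[R]_(mA, n)) (B : 'M[R]_(mB, n))
  b d x s : Pbar A B b d x s -> polyhedronP A B b d x.
Proof.
move/Pbar_iff=> [hA hB hs]; split=> // i.
rewrite -hB.
have -> : (B *m x + s) i 0 = (B *m x) i 0 + s i 0 by rewrite !mxE.
by rewrite lerDl.
Qed.

Lemma supp_opp (R : realFieldType) (k : nat) (v : 'cV[R]_k) : supp (- v) = supp v.
Proof. by apply/setP => i; rewrite !inE mxE oppr_eq0. Qed.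

Theorem lemma7p1 (R : realFieldType) (n mA mB : nat)
  (A : 'M[R]_(mA, n)) (B : 'M[R]_(mB, n)) (b : 'cV[R]_mA) (d : 'cV[R]_mB)
  (hrk : \rank (col_mx A B) = n) :
  exists (L : 'M[R]_(n, mB)) (c : 'cV[R]_n),
    let psi := fun s : 'cV[R]_mB => L *m s + c in
    (* (1) psi : Q -> P is an invertible affine bijection with M (psi s, s) = q *)
    ((forall s, Qproj A B b d s ->
        Mmat A B *m col_mx (psi s) s = qvec b d /\ polyhedronP A B b d (psi s)) /\
     (forall s1 s2, Qproj A B b d s1 -> Qproj A B b d s2 -> psi s1 = psi s2 -> s1 = s2) /\
     (forall x, polyhedronP A B b d x -> exists2 s, Qproj A B b d s & psi s = x) /\
     (exists (L' : 'M[R]_(mB, n)) (c' : 'cV[R]_mB),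
        (forall s, Qproj A B b d s -> L' *m psi s + c' = s) /\
        (forall x, polyhedronP A B b d x ->
           Qproj A B b d (L' *m x + c') /\ psi (L' *m x + c') = x))) /\
    (* (2) characterization of elementary vectors *)
    (forall g : 'cV[R]_n,
       elementary A B g <->
       exists h : 'cV[R]_mB, Wbar A B g h /\ h <> 0 /\
         support_minimal (fun w => Wproj A B w /\ w <> 0) h) /\
    (* (3) augmentation steps correspond under psi *)
    (forall (g : 'cV[R]_n) (h : 'cV[R]_mB) (s : 'cV[R]_mB),
       Wbar A B g h -> h <> 0 ->
       support_minimal (fun w => Wproj A B w /\ w <> 0) h ->
       Qproj A B b d s ->
       (forall s', is_aug (Qproj A B b d) s h s' ->
                   is_aug (polyhedronP A B b d) (psi s) g (psi s')) /\
       (forall x', is_aug (polyhedronP A B b d) (psi s) g x' ->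
                   exists2 s', is_aug (Qproj A B b d) s h s' & psi s' = x')).
Proof.
have /row_fullP [K hK] : row_full (col_mx A B) by rewrite /row_full hrk.
have Kx : forall x : 'cV[R]_n, K *m col_mx (A *m x) (B *m x) = x.
  by move=> x; rewrite -(mul_col_mx A B x) mulmxA hK mul1mx.
pose L := - (K *m col_mx 0 1%:M) : 'M[R]_(n, mB).
pose c := K *m col_mx b d.
exists L, c => psi; rewrite {}/psi /=.
have psiE : forall s, L *m s + c = K *m col_mx b (d - s).
  move=> s; rewrite /L /c mulNmx -mulmxA mul_col_mx mul0mx mul1mx.
  by rewrite -mulmxN -mulmxDr opp_col_mx add_col_mx oppr0 add0r addrC.
have psi_inv : forall x s, A *m x = b -> B *m x + s = d -> L *m s + c = x.
  by move=> x s hA hB; rewrite psiE -hA -hB addrK Kx.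
have QP : forall s, Qproj A B b d s ->
    A *m (L *m s + c) = b /\ B *m (L *m s + c) + s = d.
  by move=> s [x /Pbar_iff [hA hB _]]; rewrite (psi_inv x s hA hB).
have Qx : forall s, Qproj A B b d s -> Pbar A B b d (L *m s + c) s.
  move=> s hs; have [x /Pbar_iff [hA hB hs0]] := hs.
  by rewrite (psi_inv x s hA hB); apply/Pbar_iff.
have hneg : forall (x : 'cV[R]_n) (w : 'cV[R]_mB), B *m x + w = 0 -> w = - (B *m x).
  by move=> x w e; apply/eqP; rewrite -addr_eq0 addrC e.
split; [split; [|split; [|split]] | split].
- move=> s hs; have hP := Qx s hs; split; [by case: hP | exact: Pbar_P hP].
- move=> s1 s2 h1 h2 e; have [_ e1] := QP s1 h1; have [_ e2] := QP s2 h2.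
  rewrite e in e1; apply: (addrI (B *m (L *m s2 + c))); by rewrite e1 e2.
- move=> x hx; exists (d - B *m x).
    by exists x; apply: P_Q hx _; rewrite addrC subrK.
  by apply: psi_inv; [case: hx | rewrite addrC subrK].
- exists (- B), d; split.
    by move=> s hs; have [_ e] := QP s hs; rewrite mulNmx -e addKr.
  move=> x hx; have e : B *m x + (- B *m x + d) = d by rewrite mulNmx addrA subrr add0r.
  split; [by exists x; exact: P_Q hx e | apply: psi_inv; [by case: hx | exact e]].
- move=> g; split.
  + case=> hAg [[y [hAy [hy0 hBy]]] hmin]; exists (- (B *m g)).
    have hW : Wbar A B g (- (B *m g)) by apply/Wbar_iff; rewrite subrr.
    have hBg : B *m g <> 0.
      rewrite hBy => e; apply: hy0; by rewrite -(Kx y) hAy e col_mx0 mulmx0.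
    have hh : - (B *m g) <> 0 by move/eqP; rewrite oppr_eq0 => /eqP.
    split=> //; split=> //; split; first by split=> //; exists g.
    case=> w [[[x hWx] hw0] [_ hsub]]; apply: hmin.
    move/Wbar_iff: hWx => [hAx hBx]; have hw := hneg _ _ hBx.
    exists w; split; last by split=> //; rewrite -[supp (B *m g)]supp_opp.
    exists (- x); split; first by rewrite mulmxN hAx oppr0.
    split; last by rewrite mulmxN hw.
    by move/eqP; rewrite oppr_eq0 => /eqP ex; apply: hw0; rewrite hw ex mulmx0 oppr0.
  + case=> h [/Wbar_iff [hAg hBg] [h0 [[_ _] hmin]]]; have hh := hneg _ _ hBg.
    split=> //; split.
      exists g; split=> //; split=> //.
      by move=> e; apply: h0; rewrite hh e mulmx0 oppr0.
    case=> w [[y [hAy [hy0 hw]]] [hw0 hsub]]; apply: hmin.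
    exists w; split; last by split=> //; rewrite hh supp_opp.
    split=> //; exists (- y); apply/Wbar_iff.
    by rewrite !mulmxN hAy oppr0 hw addNr.
- move=> g h s /Wbar_iff [hAg hBg] _ _ hs; have hh := hneg _ _ hBg.
  have Lh : L *m h = g.
    rewrite /L mulNmx -mulmxA mul_col_mx mul0mx mul1mx -mulmxN opp_col_mx oppr0 hh opprK.
    by have := Kx g; rewrite hAg.
  have psiD : forall a : R, L *m (s + a *: h) + c = (L *m s + c) + a *: g.
    by move=> a; rewrite mulmxDr -scalemxAr Lh addrAC.
  have key : forall a : R, Qproj A B b d (s + a *: h) <->
      polyhedronP A B b d ((L *m s + c) + a *: g).
    move=> a; split.
      by move=> ha; rewrite -psiD; exact: Pbar_P (Qx _ ha).
    move=> hp; exists (L *m s + c + a *: g); apply: P_Q hp _.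
    have [_ e] := QP s hs.
    by rewrite mulmxDr -scalemxAr hh scalerN addrACA e subrr addr0.
  split.
    move=> s' [al [hal [-> hmax]]]; exists al; split; first by apply/key.
    split; first exact: psiD.
    by move=> be /key; exact: hmax.
  move=> x' [al [hal [-> hmax]]]; exists (s + al *: h); last exact: psiD.
  exists al; split; first by apply/key.
  split=> //; by move=> be /key; exact: hmax.
Qed.
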